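(* Let $\delta>1$ and let $P_1,\dots,P_n\in\mathbb{R}^d$ be distinct points such that every pairwise distance $c_{ij}=\|P_i-P_j\|$ ($i\neq j$) lies in $\{1,\delta\}$. Suppose the points are labeled so that $c_{in}=1$ for $1\le i\le h$ and $c_{in}=\delta$ for $h<i\le n-1$ (for some $0\le h\le n-1$). Let $M$ be the $(n-1)\times(n-1)$ matrix $M=(c_{in}^2+c_{jn}^2-c_{ij}^2)_{i,j=1}^{n-1}$ (with $c_{ii}=0$), let \[ D=\begin{bmatrix}(-3+\delta^2)J_h & -(1+\delta^2)J_{h,n-h-1}\\ -(1+\delta^2)J_{n-h-1,h} & (1-3\delta^2)J_{n-h-1}\end{bmatrix} \] (with $J_{p,q}$ the $p\times q$ all-ones matrix, $J_p=J_{p,p}$), and let \[ S=\frac{2M+D-(1+\delta^2)I_{n-1}}{\delta^2-1}. \] Let $\lambda_1\ge\lambda_2\ge\dots\ge\lambda_{n-1}$ be the eigenvalues of $S$ counted with multiplicity. Then $\lambda_i=\frac{1+\delta^2}{1-\delta^2}$ for every index $i$ with $d+2\le i\le n-2$, and $\lambda_{n-1}\le\frac{1+\delta^2}{1-\delta^2}$ whenever $n\ge d+3$. That is, $S$ has smallest eigenvalue $\lambda_{n-1}$ (counted once) and second smallest eigenvalue $\frac{1+\delta^2}{1-\delta^2}$, the latter with multiplicity at least $n-d-3$.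
   Context: $S$ is a Seidel matrix: a real symmetric matrix with zero diagonal and all off-diagonal entries equal to $\pm1$. The matrix $M$ is positive semidefinite of rank at most $d$ (it is twice the Gram matrix of the vectors $P_i-P_n$). *)

(* Defs.v *)
From HB Require Import structures.
From mathcomp Require Import all_boot all_order all_algebra.
From mathcomp Require Import reals.
Set Implicit Arguments. Unset Strict Implicit. Unset Printing Implicit Defensive.
Import Order.TTheory GRing.Theory Num.Theory.
Local Open Scope ring_scope.

Definition edist (R : realType) (d : nat) (x y : 'rV[R]_d) : R :=
  Num.sqrt (\sum_(k < d) (x 0 k - y 0 k) ^+ 2).

Section Construction.
(* The n points of the paper are P_1..P_{n-1}, given as P : 'I_n.-1 -> R^d
   (0-based: paper's P_{i+1} is P i), and P_n, given as Q. *)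
Variables (R : realType) (d n h : nat) (delta : R)
  (P : 'I_n.-1 -> 'rV[R]_d) (Q : 'rV[R]_d).

Definition Mmat : 'M[R]_(n.-1) :=
  \matrix_(i, j) (edist (P i) Q ^+ 2 + edist (P j) Q ^+ 2
                  - edist (P i) (P j) ^+ 2).

Definition Dmat : 'M[R]_(n.-1) :=
  \matrix_(i, j)
    if (i < h)%N then (if (j < h)%N then -3 + delta ^+ 2 else - (1 + delta ^+ 2))
    else (if (j < h)%N then - (1 + delta ^+ 2) else 1 - 3 * delta ^+ 2).

Definition Smat : 'M[R]_(n.-1) :=
  (delta ^+ 2 - 1)^-1 *: (2%:R *: Mmat + Dmat - (1 + delta ^+ 2)%:M).
End Construction.

(* Main.v *)
Require Import Defs.
From HB Require Import structures.
From mathcomp Require Import all_boot all_order all_algebra.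
From mathcomp Require Import reals.
From mathcomp Require Import complex ring lra zify.
Set Implicit Arguments. Unset Strict Implicit. Unset Printing Implicit Defensive.
Import Order.TTheory GRing.Theory Num.Theory Num.Def.
Local Open Scope ring_scope.
Local Open Scope sesquilinear_scope.

Lemma key_lemma (C : numClosedFieldType) N k (U : 'M[C]_N) (e : 'rV[C]_N)
  (B : 'M[C]_(N, k)) (th : C) :
  U \is unitarymx -> (k < #|[pred j : 'I_N | (th < e 0 j)%R]|)%N ->
  exists2 v : 'rV_N, v *m B = 0 &
    0 < (v *m (invmx U *m diag_mx e *m U - th%:M) *m v ^t*) 0 0.
Proof.
move=> Uu hk.
set J := [pred j : 'I_N | (th < e 0 j)%R] in hk *.
pose E : 'M[C]_(#|J|, N) := \matrix_(a, j) ((enum_val a == j)%:R).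
have EE : E *m E^T = 1%:M.
  apply/matrixP => a b; rewrite !mxE (bigD1 (enum_val a)) //=; rewrite big1.
    rewrite /E !mxE eqxx mul1r addr0 (inj_eq enum_val_inj) eq_sym //.
  by move=> j /negPf hj; rewrite /E !mxE eq_sym hj mul0r.
have rE : \rank E = #|J|.
  apply/eqP; rewrite eqn_leq rank_leq_row /=.
  by have := mxrankM_maxl E E^T; rewrite EE mxrank1.
set W := kermx (U *m B).
have rW := mxrank_ker (U *m B).
have r1 := rank_leq_col (U *m B).
have r2 := rank_leq_row (U *m B).
have r3 := rank_leq_col (E + W)%MS.
have rc := mxrank_sum_cap E W.
have : (E :&: W)%MS != 0.
  rewrite -mxrank_eq0; apply/eqP => h0.
  rewrite h0 rE rW in rc. lia.
case/rowV0Pn => c'; rewrite sub_capmx => /andP[/submxP[w cw] /sub_kermxP cW] c'0.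
have cJ : forall j, ~~ J j -> c' 0 j = 0.
  move=> j nJ; rewrite cw !mxE big1 // => a _; rewrite /E !mxE.
  case: eqP => [ea|_]; last by rewrite mulr0.
  by move: (enum_valP a) nJ; rewrite ea => hj /negP[].
exists (c' *m U).
  by rewrite -mulmxA.
have UU : U *m U ^t* = 1%:M by apply/unitarymxP.
have -> : (c' *m U) ^t* = U ^t* *m c' ^t*.
  by rewrite trmx_mul map_mxM.
rewrite invmx_unitary //.
have -> : c' *m U *m (U ^t* *m diag_mx e *m U - th%:M) *m (U ^t* *m c' ^t*)
        = c' *m diag_mx (e - th *: const_mx 1) *m c' ^t*.
  have -> : diag_mx (e - th *: const_mx 1) = diag_mx e - th%:M.
    apply/matrixP => i j; rewrite !mxE; case: eqP => [->|_].
      by rewrite !mulr1n mulr1.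
    by rewrite mulr0n subr0.
  rewrite !mulmxBr !mulmxBl !mulmxA -!(mulmxA c' U) UU mulmx1.
  rewrite -!(mulmxA _ U) UU mulmx1 !mul_mx_scalar -scalemxAr -!scalemxAl.
  by rewrite -(mulmxA c' U) UU mulmx1.
have [j0 cj0] : exists j0, c' 0 j0 != 0.
  apply/existsP; move: c'0; apply: contraR; rewrite negb_exists => /forallP h.
  apply/eqP/rowP => j; rewrite mxE; by apply/eqP; rewrite -[_ == _]negbK h.
have Jj0 : J j0 by apply: contraR cj0 => /cJ ->; rewrite eqxx.
rewrite mul_mx_diag !mxE (bigD1 j0) //= !mxE.
apply: ltr_wpDr.
  apply: sumr_ge0 => j _; rewrite !mxE.
  case: (boolP (J j)) => [Jj|/cJ ->]; last by rewrite !mul0r.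
  rewrite mulrAC; apply: mulr_ge0; first exact: mul_conjC_ge0.
  by rewrite mulr1 subr_ge0 ltW.
rewrite mulrAC; apply: mulr_gt0; first by rewrite mul_conjC_gt0.
by rewrite mulr1 subr_gt0.
Qed.

Definition Gm (R : realType) d n (P : 'I_n.-1 -> 'rV[R]_d) (Q : 'rV[R]_d) :
  'M[R]_(n.-1, d) := \matrix_(i, k) (P i 0 k - Q 0 k).
Definition lv (R : realType) n h (delta : R) : 'cV[R]_(n.-1) :=
  \col_i (if (i < h)%N then delta ^+ 2 - 3 else 1 - 3 * delta ^+ 2).

Lemma edist2 (R : realType) d (x y : 'rV[R]_d) :
  edist x y ^+ 2 = \sum_(k < d) (x 0 k - y 0 k) ^+ 2.
Proof. by rewrite /edist sqr_sqrtr // sumr_ge0 // => k _; rewrite sqr_ge0. Qed.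

Lemma A1 (R : realType) d n h (delta : R) (P : 'I_n.-1 -> 'rV[R]_d) Q :
  delta ^+ 2 - 1 != 0 ->
  Smat h delta P Q - ((1 + delta ^+ 2) / (1 - delta ^+ 2))%:M =
  (delta ^+ 2 - 1)^-1 *: (4%:R *: (Gm P Q *m (Gm P Q)^T)
     + 2^-1 *: (const_mx 1 *m (lv n h delta)^T + lv n h delta *m (const_mx 1)^T)).
Proof.
move=> hd; apply/matrixP => i j.
have hM : edist (P i) Q ^+ 2 + edist (P j) Q ^+ 2 - edist (P i) (P j) ^+ 2 = 2%:R * \sum_k Gm P Q i k * Gm P Q j k.
  rewrite !edist2 mulr_sumr -sumrN -!big_split /=.
  by apply: eq_bigr => k _; rewrite /Gm !mxE; ring.
have hd' : 1 - delta ^+ 2 != 0 by rewrite -opprB oppr_eq0.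
rewrite /Smat !mxE hM ?mxE !big_ord1 !mxE.
have -> : \sum_j0 Gm P Q i j0 * (Gm P Q)^T j0 j = \sum_k Gm P Q i k * Gm P Q j k.
  by apply: eq_bigr => k _; rewrite /Gm !mxE.
set X := \sum_k _.
case: eqP => [<-|_]; [case: (ltnP i h) => hi | case: (ltnP i h) => hi; case: (ltnP j h) => hj]; rewrite ?mulr1n ?mulr0n. all: field.
all: by rewrite ?hd ?hd'.
Qed.

Lemma sorted_ge_nth (R : realDomainType) (s : seq R) :
  sorted (fun x y => y <= x) s ->
  forall i j, (i <= j)%N -> (j < size s)%N -> s`_j <= s`_i.
Proof.
move=> hs i j hij hj.
have tr : transitive (fun x y : R => y <= x).
  by move=> y x z hyx hzy; exact: le_trans hzy hyx.
have rf : reflexive (fun x y : R => y <= x) by move=> x; exact: lexx.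
have := sorted_leq_nth tr rf 0 hs; apply => //; rewrite inE; lia.
Qed.

Lemma sorted_count1 (R : realDomainType) (s : seq R) (th : R) a :
  sorted (fun x y => y <= x) s -> (count (fun x => (th < x)%R) s <= a)%N ->
  forall i, (a <= i)%N -> (i < size s)%N -> s`_i <= th.
Proof.
move=> hs hc i hi his; rewrite leNgt; apply/negP => hlt.
have : (count (fun x => (th < x)%R) (take i.+1 s) = i.+1)%N.
  have /eqP -> : count (fun x => (th < x)%R) (take i.+1 s) == size (take i.+1 s).
    rewrite -all_count; apply/(all_nthP 0) => j; rewrite size_takel // => hj.
    rewrite nth_take //.
    apply: lt_le_trans hlt _; apply: sorted_ge_nth => //; lia.
  by rewrite size_takel.
have := count_cat (fun x => (th < x)%R) (take i.+1 s) (drop i.+1 s).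
rewrite cat_take_drop; lia.
Qed.

Lemma sorted_count2 (R : realDomainType) (s : seq R) (th : R) b :
  sorted (fun x y => y <= x) s -> (count (fun x => (x < th)%R) s <= b)%N ->
  forall i, (i + b < size s)%N -> th <= s`_i.
Proof.
move=> hs hc i his; rewrite leNgt; apply/negP => hlt.
have : (count (fun x => (x < th)%R) (drop i s) = size s - i)%N.
  have /eqP -> : count (fun x => (x < th)%R) (drop i s) == size (drop i s).
    rewrite -all_count; apply/(all_nthP 0) => j; rewrite size_drop => hj.
    have hj' : (j < size s - i)%N := hj.
    rewrite nth_drop.
    apply: le_lt_trans _ hlt; apply: sorted_ge_nth => //; lia.
  by rewrite size_drop.
have := count_cat (fun x => (x < th)%R) (take i s) (drop i s).
rewrite cat_take_drop; lia.
Qed.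

Lemma conj_tr_mul (C : numClosedFieldType) m n (v : 'rV[C]_m) (X : 'M[C]_(m, n)) :
  X ^ conjC = X -> X^T *m v ^t* = (v *m X) ^t*.
Proof. by move=> hX; rewrite trmx_mul map_mxM; congr (_ *m _); rewrite -map_trmx hX. Qed.

Lemma form_ge0 (C : numClosedFieldType) m (w : 'rV[C]_m) : 0 <= (w *m w ^t*) 0 0.
Proof. by rewrite mxE; apply: sumr_ge0 => k _; rewrite !mxE mul_conjC_ge0. Qed.

Lemma quad_form (C : numClosedFieldType) N d (G : 'M[C]_(N, d)) (o l : 'cV[C]_N)
  (v : 'rV[C]_N) (c a b : C) :
  G ^ conjC = G -> o ^ conjC = o -> v *m o = 0 ->
  (v *m (c *: (a *: (G *m G^T) + b *: (o *m l^T + l *m o^T))) *m v ^t*) 0 0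
  = c * a * ((v *m G) *m (v *m G) ^t*) 0 0.
Proof.
move=> hG ho vo.
have e1 : v *m (G *m G^T) *m v ^t* = (v *m G) *m (v *m G) ^t*.
  by rewrite -(conj_tr_mul v hG) !mulmxA.
have e2 : v *m (o *m l^T) *m v ^t* = 0 by rewrite !mulmxA vo !mul0mx.
have e3 : v *m (l *m o^T) *m v ^t* = 0.
  by rewrite mulmxA -mulmxA (conj_tr_mul v ho) vo trmx0 map_mx0 mulmx0.
rewrite -scalemxAr -scalemxAl mulmxDr mulmxDl -!scalemxAr -!scalemxAl mulmxDr mulmxDl.
rewrite e1 e2 e3 addr0 scaler0 addr0 !mxE mulrA.
done.
Qed.

Lemma conj_real_mx (R : realType) m n (X : 'M[R]_(m, n)) :
  map_mx conjC (map_mx (real_complex R) X) = map_mx (real_complex R) X.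
Proof.
apply/matrixP => i j; rewrite !mxE; apply: conj_Creal.
rewrite realE -(rmorph0 (real_complex R)) !lecR; exact: le_total.
Qed.

Lemma char_poly_similar (F : fieldType) n (U A : 'M[F]_n) :
  U \in unitmx -> char_poly (invmx U *m A *m U) = char_poly A.
Proof.
move=> Uu; rewrite /char_poly /char_poly_mx.
have -> : 'X%:M - map_mx polyC (invmx U *m A *m U) =
  map_mx polyC (invmx U) *m ('X%:M - map_mx polyC A) *m map_mx polyC U.
  have hXU : map_mx polyC (invmx U) *m 'X%:M *m map_mx polyC U = 'X%:M.
    by rewrite mul_mx_scalar -scalemxAl -map_mxM mulVmx // map_mx1 scalemx1.
  by rewrite mulmxBr mulmxBl hXU !map_mxM.
by rewrite !det_mulmx mulrAC -det_mulmx -map_mxM mulVmx // map_mx1 det1 mul1r.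
Qed.
Lemma card_count (T : finType) (p : pred T) : #|[pred j | p j]| = count p (enum T).
Proof. rewrite cardE /enum_mem size_filter count_filter; apply: eq_count => x /=; by rewrite andbT. Qed.

Lemma prod_enum_ord (F : fieldType) N (f : 'I_N -> F) :
  \prod_(x <- [seq f j | j <- enum 'I_N]) ('X - x%:P) = \prod_(j < N) ('X - (f j)%:P).
Proof. by rewrite big_map big_enum. Qed.

Lemma main_aux (R : realType) (d n h : nat) (delta : R)
  (P : 'I_n.-1 -> 'rV[R]_d) (Q : 'rV[R]_d) :
  (0 < n)%N ->
  1 < delta ->
  injective P ->
  (forall i : 'I_n.-1, P i != Q) ->
  (forall i j : 'I_n.-1, i != j ->
     edist (P i) (P j) = 1 \/ edist (P i) (P j) = delta) ->
  (h <= n.-1)%N ->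
  (forall i : 'I_n.-1, (i < h)%N -> edist (P i) Q = 1) ->
  (forall i : 'I_n.-1, (h <= i)%N -> edist (P i) Q = delta) ->
  forall s : seq R,
    size s = n.-1 ->
    sorted (fun x y => y <= x) s ->
    char_poly (Smat h delta P Q) = \prod_(x <- s) ('X - x%:P) ->
    (forall i : nat, (d + 2 <= i)%N -> (i <= n.-2)%N ->
       s`_(i.-1) = (1 + delta ^+ 2) / (1 - delta ^+ 2))
    /\ ((d + 3 <= n)%N -> s`_(n.-2) <= (1 + delta ^+ 2) / (1 - delta ^+ 2)).
Proof.
move=> n0 hdel _ _ _ _ _ _ s hs hsort hchar.
have h2 : 1 < delta ^+ 2 by rewrite expr2; nra.
have hd : delta ^+ 2 - 1 != 0 by rewrite subr_eq0 gt_eqF.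
have hc : 0 < (delta ^+ 2 - 1)^-1 by rewrite invr_gt0 subr_gt0.
set th := (1 + delta ^+ 2) / (1 - delta ^+ 2).
set S := Smat h delta P Q.
set G := Gm P Q.
set o : 'cV[R]_(n.-1) := const_mx 1.
set l := lv n h delta.
set Y := 4%:R *: (G *m G^T) + 2^-1 *: (o *m l^T + l *m o^T).
have hA : S - th%:M = (delta ^+ 2 - 1)^-1 *: Y by apply: A1.
have symS : S^T = S.
  have edS : forall x y : 'rV[R]_d, edist x y = edist y x.
    move=> x y; rewrite /edist; congr Num.sqrt; apply: eq_bigr => k _.
    by rewrite -opprB sqrrN.
  apply/matrixP => i j; rewrite /S /Smat !mxE eq_sym.
  congr (_ * (_ + _ - _)).
    by rewrite (edS (P j) (P i)) (addrC (edist (P j) Q ^+ 2)).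
  by case: (ltnP i h) => _; case: (ltnP j h) => _.
set SC := map_mx (real_complex R) S.
have SCt : SC ^t* = SC.
  by rewrite /SC -map_trmx conj_real_mx map_trmx symS.
have nSC : SC \is normalmx by apply/normalmxP; rewrite SCt.
have hspec : SC = invmx (spectralmx SC) *m diag_mx (spectral_diag SC) *m spectralmx SC by apply/orthomx_spectralP.
have Uu := spectral_unitarymx SC.
have Uunit := spectral_unit SC.
set U := spectralmx SC in hspec Uu Uunit.
set e := spectral_diag SC in hspec.
have hperm : perm_eq (map (real_complex R) s) [seq e 0 j | j <- enum 'I_(n.-1)].
  apply: prod_XsubC_eq; rewrite prod_enum_ord big_map.
  have <- : char_poly SC = \prod_(x <- s) ('X - ((real_complex R) x)%:P).
    rewrite /SC -map_char_poly hchar rmorph_prod.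
    by apply: eq_bigr => x _; exact: map_polyXsubC.
  rewrite hspec char_poly_similar // char_poly_trig ?diag_mx_is_trig //.
  by apply: eq_bigr => j _; rewrite mxE eqxx mulr1n.
have hcnt : forall p : pred R[i], count p (map (real_complex R) s) = #|[pred j | p (e 0 j)]|.
  by move=> p; rewrite (permP hperm) card_count count_map.
set G' := map_mx (real_complex R) G.
set o' := map_mx (real_complex R) o.
set l' := map_mx (real_complex R) l.
have hSC : SC - ((real_complex R) th)%:M = (real_complex R) ((delta ^+ 2 - 1)^-1) *:
   ((real_complex R) 4%:R *: (G' *m G'^T) + (real_complex R) 2^-1 *: (o' *m l'^T + l' *m o'^T)).
  rewrite -map_scalar_mx -map_mxB hA /Y map_mxZ map_mxD !map_mxZ map_mxD !map_mxM.
  by rewrite !map_trmx.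
have pos : (count (fun x => (th < x)%R) s <= d.+1)%N.
  rewrite leqNgt; apply/negP => hgt.
  have hk : (d + 1 < #|[pred j | ((real_complex R) th < e 0 j)%R]|)%N.
    rewrite -(hcnt (fun z => (real_complex R) th < z)) count_map addn1.
    by rewrite (@eq_count _ _ (fun x => (th < x)%R)) // => x /=; exact: ltcR.
  have [v vB] := key_lemma (row_mx G' o') Uu hk.
  rewrite -hspec hSC.
  have [vG vo] : v *m G' = 0 /\ v *m o' = 0.
    by apply/eq_row_mx; rewrite -mul_mx_row vB row_mx0.
  rewrite quad_form ?conj_real_mx // vG mul0mx mxE mulr0.
  by rewrite ltxx.
have neg : (count (fun x => (x < th)%R) s <= 1)%N.
  rewrite leqNgt; apply/negP => hgt.
  have hk : (1 < #|[pred j | (- (real_complex R) th < (- e) 0 j)%R]|)%N.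
    rewrite (@eq_card _ _ [pred j | (e 0 j < real_complex R th)%R]); last first.
      by move=> j; rewrite !inE mxE ltrN2.
    rewrite -(hcnt (fun z => z < (real_complex R) th)) count_map.
    by rewrite (@eq_count _ _ (fun x => (x < th)%R)) // => x /=; exact: ltcR.
  have [v vo] := key_lemma o' Uu hk.
  have -> : invmx U *m diag_mx (- e) *m U - (- (real_complex R) th)%:M
            = - (SC - ((real_complex R) th)%:M).
    have -> : diag_mx (- e) = - diag_mx e.
      by apply/matrixP => i j; rewrite !mxE mulNrn.
    have -> : (- (real_complex R) th)%:M = - ((real_complex R) th)%:M :> 'M_(n.-1).
      by apply/matrixP => i j; rewrite !mxE mulNrn.
    by rewrite hspec mulmxN mulNmx opprB opprK addrC.
  rewrite mulmxN mulNmx mxE hSC quad_form ?conj_real_mx // oppr_gt0 => hlt.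
  suff H0 : 0 <= ((delta ^+ 2 - 1)^-1)%:C%C * 4%:C%C * (v *m G' *m (v *m G') ^t*) 0 0.
    by have := lt_le_trans hlt H0; rewrite ltxx.
  apply: mulr_ge0; last exact: form_ge0.
  apply: mulr_ge0; rewrite -(rmorph0 (real_complex R)) lecR ?ler0n //.
  exact: ltW.
split.
  move=> i hi1 hi2; apply/le_anti/andP; split.
    apply: (sorted_count1 hsort pos); rewrite ?hs; lia.
  apply: (sorted_count2 hsort neg); rewrite hs; lia.
move=> hn; apply: (sorted_count1 hsort pos); rewrite ?hs; lia.
Qed.

Local Close Scope sesquilinear_scope.

Theorem mainTheorem5 (R : realType) (d n h : nat) (delta : R)
  (P : 'I_n.-1 -> 'rV[R]_d) (Q : 'rV[R]_d) :
  (0 < n)%N ->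
  1 < delta ->
  injective P ->
  (forall i : 'I_n.-1, P i != Q) ->
  (forall i j : 'I_n.-1, i != j ->
     edist (P i) (P j) = 1 \/ edist (P i) (P j) = delta) ->
  (h <= n.-1)%N ->
  (forall i : 'I_n.-1, (i < h)%N -> edist (P i) Q = 1) ->
  (forall i : 'I_n.-1, (h <= i)%N -> edist (P i) Q = delta) ->
  forall s : seq R,
    size s = n.-1 ->
    sorted (fun x y => y <= x) s ->
    char_poly (Smat h delta P Q) = \prod_(x <- s) ('X - x%:P) ->
    (forall i : nat, (d + 2 <= i)%N -> (i <= n.-2)%N ->
       s`_(i.-1) = (1 + delta ^+ 2) / (1 - delta ^+ 2))
    /\ ((d + 3 <= n)%N -> s`_(n.-2) <= (1 + delta ^+ 2) / (1 - delta ^+ 2)).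
Proof. exact: main_aux. Qed.
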